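(* Let $\Lambda^r_{\mathrm{nf}}$ be the set of normal resource $\lambda$-terms equipped with the resource partial metric $r$, and let $\mathrm{Ide}_r(\Lambda^r_{\mathrm{nf}})$ be the set of ideals of $(\Lambda^r_{\mathrm{nf}},\leq_r)$, ordered by inclusion. Then the partial metric $H^*_r$ quantifies the Scott topology of $(\mathrm{Ide}_r(\Lambda^r_{\mathrm{nf}}),\subseteq)$, i.e. $\mathcal O_\sigma=\mathcal O_{H^*_r}$.
   Context: Resource terms: $t::=x\mid\lambda x.t\mid t\langle t_1,\dots,t_k\rangle$ where $\langle t_1,\dots,t_k\rangle$ is a finite multiset ($k\geq0$; $\emptyset$ is the empty multiset). A normal resource term has the form $t=\lambda x_1\dots\lambda x_n.x\,b_1\dots b_m$ with each $b_i=\langle t_i^1,\dots,t_i^{m_i}\rangle$ a multiset of normal resource terms. Height: $h(t)=\max_{i,j}h(t_i^j)+1$ (max of empty set $=0$). The head occurrence $x$ of $t$ has height $1$; an occurrence inside $t_i^j$ has height (its height in $t_i^j$)$+1$. Truncation $t|_n$: if $h(t)\leq n$ then $t|_n=t$; otherwise replace every subterm $x\,b_1\dots b_m$ whose head occurrence $x$ is at height $n$ by $x\,\emptyset\dots\emptyset$. Resource partial metric: $r(t,u)=\inf\{2^{-n}\mid n\in\mathbb N,\ h(t),h(u)\geq n,\ t|_n=u|_n\}$. For a partial metric $p$: $x\leq_p y$ iff $p(x,y)\leq p(x,x)$; open balls $B^p_\epsilon(x)=\{y\mid p(y,x)<p(x,x)+\epsilon\}$; $\mathcal O_p$ = unions of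 open balls. An ideal is a lower directed (nonempty) subset. $H^*_r(A,B)=\max\{\sup_{a\in A}\inf_{a'\in A,\ a\leq_r a',\ b\in B}r(a',b),\ \sup_{b\in B}\inf_{b'\in B,\ b\leq_r b',\ a\in A}r(a,b')\}$. Scott topology of a poset: upper sets $U$ such that $x\in U$ implies $y\in U$ for some $y\ll x$, where $y\ll x$ iff every directed $\Delta$ with $x\leq\bigvee\Delta$ contains some $d\geq y$. *)

(* Defs.v *)
From HB Require Import structures.
From mathcomp Require Import all_boot all_order all_algebra.
From mathcomp Require Import boolp classical_sets reals.
From Stdlib Require Import Permutation.
Set Implicit Arguments. Unset Strict Implicit. Unset Printing Implicit Defensive.
Import Order.TTheory GRing.Theory Num.Theory.
Local Open Scope classical_set_scope.
Local Open Scope ring_scope.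

(* Normal resource terms  \x_1..\x_k. x b_1 .. b_m  in de Bruijn notation:
   NT k x [:: b_1; ..; b_m], each bag b_i a finite multiset of normal terms
   represented by a list (taken up to permutation, see [nteq]). *)
Inductive nterm : Type :=
| NT : nat -> nat -> seq (seq nterm) -> nterm.

Fixpoint nteq (t u : nterm) {struct t} : Prop :=
  match t, u with
  | NT k x bs, NT k' x' bs' =>
    k = k' /\ x = x' /\
    (fix bagseq (bs bs' : seq (seq nterm)) : Prop :=
       match bs, bs' with
       | [::], [::] => True
       | b :: bs1, b' :: bs1' =>
         (exists c : seq nterm, Permutation b' c /\
            (fix pw (b c : seq nterm) : Prop :=
               match b, c with
               | [::], [::] => True
               | t1 :: b1, u1 :: c1 => nteq t1 u1 /\ pw b1 c1
               | _, _ => False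
               end) b c)
         /\ bagseq bs1 bs1'
       | _, _ => False
       end) bs bs'
  end.

Fixpoint height (t : nterm) : nat :=
  match t with
  | NT _ _ bs => (foldr maxn 0%N (map (fun b => foldr maxn 0%N (map height b)) bs)).+1
  end.

Fixpoint trunc_rec (n : nat) (t : nterm) {struct t} : nterm :=
  match t with
  | NT k x bs =>
    match n with
    | 0%N => t
    | 1%N => NT k x (map (fun _ => [::]) bs)
    | n'.+1 => NT k x (map (map (trunc_rec n')) bs)
    end
  end.

Definition trunc (n : nat) (t : nterm) : nterm :=
  if (height t <= n)%N then t else trunc_rec n t.

(* resource partial metric; convention inf(empty) = 1 (the maximal distance) *)
Definition rdist (R : realType) (t u : nterm) : R :=
  inf ([set (2 : R) ^- n | n in
        [set n : nat | (1 <= n)%N /\ (n <= height t)%N /\ (n <= height u)%N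
                       /\ nteq (trunc n t) (trunc n u)]] `|` [set 1]).

Definition pm_le (T : Type) (R : realType) (p : T -> T -> R) (x y : T) : Prop :=
  p x y <= p x x.

Definition pm_ball (T : Type) (R : realType) (p : T -> T -> R) (x : T) (e : R)
  : set T := [set y | p y x < p x x + e].

Definition pm_open (T : Type) (R : realType) (p : T -> T -> R) (U : set T)
  : Prop :=
  exists F : set (T * R), (forall i, F i -> 0 < i.2) /\
    U = \bigcup_(i in F) pm_ball p i.1 i.2.

Definition is_ideal (T : Type) (le : T -> T -> Prop) (I : set T) : Prop :=
  (exists x, I x) /\
  (forall x y, I y -> le x y -> I x) /\
  (forall x y, I x -> I y -> exists z, I z /\ le x z /\ le y z).

Definition Ide (R : realType) : Type :=
  {I : set nterm | is_ideal (pm_le (@rdist R)) I}.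

Definition ide_le (R : realType) (A B : Ide R) : Prop :=
  (proj1_sig A `<=` proj1_sig B).

Definition Hstar (R : realType) (A B : Ide R) : R :=
  let A0 := proj1_sig A in let B0 := proj1_sig B in
  let le := pm_le (@rdist R) in
  Num.max
    (sup [set inf [set @rdist R q.1 q.2 |
                   q in [set q : nterm * nterm | A0 q.1 /\ le a q.1 /\ B0 q.2]]
         | a in A0])
    (sup [set inf [set @rdist R q.1 q.2 |
                   q in [set q : nterm * nterm | B0 q.2 /\ le b q.2 /\ A0 q.1]]
         | b in B0]).

Definition directed (P : Type) (le : P -> P -> Prop) (D : set P) : Prop :=
  (exists d, D d) /\
  (forall a b, D a -> D b -> exists c, D c /\ le a c /\ le b c).

Definition is_lub (P : Type) (le : P -> P -> Prop) (D : set P) (s : P) : Prop :=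
  (forall d, D d -> le d s) /\ (forall u, (forall d, D d -> le d u) -> le s u).

Definition way_below (P : Type) (le : P -> P -> Prop) (y x : P) : Prop :=
  forall (D : set P) (s : P), directed le D -> is_lub le D s -> le x s ->
    exists d, D d /\ le y d.

Definition scott_open (P : Type) (le : P -> P -> Prop) (U : set P) : Prop :=
  (forall x y, U x -> le x y -> U y) /\
  (forall x, U x -> exists y, way_below le y x /\ U y).

(* Main.v *)
Require Import Defs.
From mathcomp Require Import all_boot all_order all_algebra.
From mathcomp Require Import boolp classical_sets reals.
From mathcomp Require Import zify.
From Stdlib Require Import Permutation.
Set Implicit Arguments. Unset Strict Implicit. Unset Printing Implicit Defensive.

Lemma smapE (A B : Type) (f : A -> B) (l : seq A) : map f l = List.map f l.
Proof. by elim: l => //= a l ->. Qed.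

Lemma foldr_maxn_In (A : Type) (f : A -> nat) (l : seq A) y :
  List.In y l -> (f y <= foldr maxn 0 (map f l))%N.
Proof.
elim: l => //= a l IH [->|H]; first by rewrite leq_maxl.
by apply: leq_trans (IH H) _; rewrite leq_maxr.
Qed.

Lemma In_height k x bs b s : List.In b bs -> List.In s b ->
  (height s < height (NT k x bs))%N.
Proof.
move=> Hb Hs /=; rewrite ltnS.
apply: leq_trans (foldr_maxn_In (fun b => foldr maxn 0 (map height b)) Hb).
exact: (foldr_maxn_In height Hs).
Qed.

Lemma height_pos t : (0 < height t)%N.
Proof. by case: t. Qed.

Lemma nterm_hind (P : nterm -> Prop) :
  (forall k x bs, (forall b s, List.In b bs -> List.In s b -> P s) -> P (NT k x bs)) ->
  forall t, P t.
Proof.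
move=> H t.
suff: forall N t, (height t <= N)%N -> P t by move/(_ (height t) t (leqnn _)).
elim=> [|N IH] [k x bs] Ht; first by move: (height_pos (NT k x bs)); rewrite ltnNge Ht.
apply: H => b s Hb Hs; apply: IH.
have := In_height k x Hb Hs; lia.
Qed.

Definition pwf := fix pw (b c : seq nterm) : Prop :=
  match b, c with
  | [::], [::] => True
  | t1 :: b1, u1 :: c1 => nteq t1 u1 /\ pw b1 c1
  | _, _ => False
  end.

Lemma pwfE b c : pwf b c <-> List.Forall2 nteq b c.
Proof.
elim: b c => [|t b IH] [|u c] /=; split => //; try by inversion 1.
- by move=> [H1 H2]; constructor => //; apply/IH.
- by inversion 1; subst; split => //; apply/IH.
Qed.

Definition bagrel (b b' : seq nterm) := exists c, Permutation b' c /\ List.Forall2 nteq b c.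

Lemma nteqE k x bs k' x' bs' : nteq (NT k x bs) (NT k' x' bs') <->
  [/\ k = k', x = x' & List.Forall2 bagrel bs bs'].
Proof.
simpl; split.
- move=> [-> [-> H]]; split => //.
  elim: bs bs' H => [|b0 bs0 IH] [|b1 bs1] //= [[c [Hp Hc]] H].
  constructor; last exact: IH.
  by exists c; split => //; apply/pwfE.
- move=> [-> -> H]; split => //; split => //.
  elim: H => [|b0 b1 bs0 bs1 [c [Hp Hc]] _ IH] //; split => //.
  by exists c; split => //; apply/pwfE.
Qed.
Lemma Forall2_refl_In (A : Type) (R : A -> A -> Prop) (l : seq A) :
  (forall a, List.In a l -> R a a) -> List.Forall2 R l l.
Proof.
elim: l => [|a l IH] H; constructor; first by apply: H; left.
by apply: IH => b Hb; apply: H; right.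
Qed.

Lemma Forall2_flip_In (A B : Type) (R : A -> B -> Prop) (S : B -> A -> Prop) l1 l2 :
  (forall a b, List.In a l1 -> R a b -> S b a) -> List.Forall2 R l1 l2 -> List.Forall2 S l2 l1.
Proof.
move=> H F; elim: F H => [|a b l1' l2' Hab _ IH] H; constructor.
- by apply: H => //; left.
- by apply: IH => a' b' Ha; apply: H; right.
Qed.

Lemma Forall2_trans_In (A B C : Type) (R : A -> B -> Prop) (S : B -> C -> Prop)
  (T : A -> C -> Prop) l1 l2 l3 :
  (forall a b c, List.In a l1 -> R a b -> S b c -> T a c) ->
  List.Forall2 R l1 l2 -> List.Forall2 S l2 l3 -> List.Forall2 T l1 l3.
Proof.
move=> H F; elim: F l3 H => [|a b l1' l2' Hab _ IH] l3 H G; inversion G; subst; constructor.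
- by apply: H Hab _ => //; left.
- by apply: IH => // a' b' c' Ha; apply: H; right.
Qed.

Lemma Forall2_map_In (A B C D : Type) (R : A -> B -> Prop) (S : C -> D -> Prop)
  (f : A -> C) (g : B -> D) l1 l2 :
  (forall a b, List.In a l1 -> R a b -> S (f a) (g b)) ->
  List.Forall2 R l1 l2 -> List.Forall2 S (map f l1) (map g l2).
Proof.
move=> H F; elim: F H => [|a b l1' l2' Hab _ IH] H /=; constructor.
- by apply: H => //; left.
- by apply: IH => a' b' Ha; apply: H; right.
Qed.

Lemma map_ext_In' (A B : Type) (f g : A -> B) (l : seq A) :
  (forall a, List.In a l -> f a = g a) -> map f l = map g l.
Proof.
elim: l => //= a l IH H; rewrite H; last by left.
by rewrite IH // => b Hb; apply: H; right.
Qed.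

Lemma map_id_In (A : Type) (f : A -> A) (l : seq A) :
  (forall a, List.In a l -> f a = a) -> map f l = l.
Proof.
elim: l => //= a l IH H; rewrite H; last by left.
by rewrite IH // => b Hb; apply: H; right.
Qed.

Lemma nteq_refl t : nteq t t.
Proof.
elim/nterm_hind: t => k x bs IH; apply/nteqE; split => //.
apply: Forall2_refl_In => b Hb; exists b; split => //.
by apply: Forall2_refl_In => s Hs; apply: (IH _ _ Hb Hs).
Qed.

Lemma nteq_sym t u : nteq t u -> nteq u t.
Proof.
elim/nterm_hind: t u => k x bs IH [k' x' bs'] /nteqE [-> -> H]; apply/nteqE; split => //.
apply: Forall2_flip_In H => b b' Hb [c [Hp Hc]].
have Hc' : List.Forall2 nteq c b.
  by apply: Forall2_flip_In Hc => s s' Hs; apply: (IH _ _ Hb Hs).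
have [d [Hd1 Hd2]] := Permutation_Forall2 (Permutation_sym Hp) Hc'.
by exists d.
Qed.

Lemma nteq_trans t u v : nteq t u -> nteq u v -> nteq t v.
Proof.
elim/nterm_hind: t u v => k x bs IH [k' x' bs'] [k'' x'' bs''].
move=> /nteqE [-> -> H1] /nteqE [-> -> H2]; apply/nteqE; split => //.
apply: Forall2_trans_In H1 H2 => b b' b'' Hb [c [Hp Hc]] [d [Hq Hd]].
have [d' [Hd1 Hd2]] := Permutation_Forall2 Hp Hd.
exists d'; split; first exact: Permutation_trans Hq Hd1.
by apply: Forall2_trans_In Hc Hd2 => s s' s'' Hs; apply: (IH _ _ Hb Hs).
Qed.

Lemma trunc_rec_nteq n t u : nteq t u -> nteq (trunc_rec n t) (trunc_rec n u).
Proof.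
elim/nterm_hind: t n u => k x bs IH n [k' x' bs'] /nteqE [-> -> H].
case: n => [|[|p]] /=; first by apply/nteqE.
- apply/nteqE; split => //; apply: Forall2_map_In H => b b' _ _.
  by exists [::]; split.
- apply/nteqE; split => //; apply: Forall2_map_In H => b b' Hb [c [Hp Hc]].
  exists (map (trunc_rec p.+1) c); split.
    by rewrite !smapE; apply: Permutation_map.
  by apply: Forall2_map_In Hc => s s' Hs; apply: (IH _ _ Hb Hs).
Qed.

Lemma heightE k x bs : height (NT k x bs) =
  (foldr maxn 0 (map (fun b => foldr maxn 0 (map height b)) bs)).+1.
Proof. by []. Qed.

Lemma foldr_maxn_min (A : Type) (c : nat) (f : A -> nat) (l : seq A) :
  foldr maxn 0 (map (fun a => minn c (f a)) l) = minn c (foldr maxn 0 (map f l)).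
Proof. elim: l => [|a l IH] /=; first by rewrite minn0. rewrite IH; lia. Qed.

Lemma foldr_maxn0 (A : Type) (l : seq A) : foldr maxn 0 (map (fun _ => 0%N) l) = 0%N.
Proof. by elim: l => //= a l ->. Qed.

Lemma height_trunc_rec n t : (1 <= n)%N -> height (trunc_rec n t) = minn n (height t).
Proof.
elim/nterm_hind: t n => k x bs IH [|[|p]] // _.
- change (trunc_rec 1 (NT k x bs)) with (NT k x (map (fun _ => [::]) bs)).
  have H0 : foldr maxn 0 (map (fun b => foldr maxn 0 (map height b))
     (map (fun _ => [::]) bs)) = 0%N by clear IH; elim: bs => //= b bs ->.
  rewrite heightE H0.
  have := height_pos (NT k x bs); lia.
- change (trunc_rec p.+2 (NT k x bs)) with (NT k x (map (map (trunc_rec p.+1)) bs)).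
  rewrite !heightE -map_comp minnSS -foldr_maxn_min; congr (_.+1).
  congr foldr; apply: map_ext_In' => b Hb /=.
  rewrite -map_comp -foldr_maxn_min; congr foldr; apply: map_ext_In' => s Hs /=.
  exact: (IH _ _ Hb Hs) _.
Qed.

Lemma trunc_rec_id n t : (1 <= n)%N -> (height t <= n)%N -> trunc_rec n t = t.
Proof.
elim/nterm_hind: t n => k x bs IH [|[|p]] // _; rewrite heightE ltnS.
- move=> H /=; congr NT; apply: map_id_In => b Hb.
  have := foldr_maxn_In (fun b => foldr maxn 0 (map height b)) Hb.
  case: b Hb => // s b _ /=; have := height_pos s; lia.
- move=> H /=; congr NT; apply: map_id_In => b Hb; apply: map_id_In => s Hs.
  apply: (IH _ _ Hb Hs) _ _ => //.
  have := foldr_maxn_In (fun b => foldr maxn 0 (map height b)) Hb.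
  have := foldr_maxn_In height Hs; lia.
Qed.

Lemma trunc_rec_comp m n t : (1 <= m <= n)%N ->
  trunc_rec m (trunc_rec n t) = trunc_rec m t.
Proof.
elim/nterm_hind: t m n => k x bs IH [|[|q]] [|[|p]] // H /=; try by rewrite -map_comp.
congr NT; rewrite -map_comp; apply: map_ext_In' => b Hb /=.
rewrite -map_comp; apply: map_ext_In' => s Hs /=; apply: (IH _ _ Hb Hs) _ _ _.
move: H; rewrite !ltnS; lia.
Qed.

Lemma truncE n t : (1 <= n)%N -> trunc n t = trunc_rec n t.
Proof. by rewrite /trunc; case: ifP => // H1 H2; rewrite trunc_rec_id. Qed.

Import Order.TTheory GRing.Theory Num.Theory.
Local Open Scope classical_set_scope.
Local Open Scope ring_scope.

Definition Ag n t u := [/\ (1 <= n)%N, (n <= height t)%N, (n <= height u)%N &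
  nteq (trunc_rec n t) (trunc_rec n u)].

Lemma Ag_sym n t u : Ag n t u -> Ag n u t.
Proof. by case=> *; split => //; apply: nteq_sym. Qed.

Lemma Ag_trans n t u v : Ag n t u -> Ag n u v -> Ag n t v.
Proof. by case=> ? ? ? H1 [? ? ? H2]; split => //; apply: nteq_trans H1 H2. Qed.

Lemma Ag_down m n t u : (1 <= m <= n)%N -> Ag n t u -> Ag m t u.
Proof.
move=> Hmn [H1 H2 H3 H4]; split; try lia.
rewrite -(trunc_rec_comp t Hmn) -(trunc_rec_comp u Hmn).
exact: trunc_rec_nteq.
Qed.

Lemma Ag_refl n t : (1 <= n <= height t)%N -> Ag n t t.
Proof. by move=> /andP[H1 H2]; split => //; apply: nteq_refl. Qed.

Lemma pow_pos (R : realType) n : 0 < (2 : R) ^- n.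
Proof. by rewrite invr_gt0 exprn_gt0. Qed.

Lemma pow_anti (R : realType) n m : (n <= m)%N -> (2 : R) ^- m <= (2 : R) ^- n.
Proof.
move=> H; rewrite lef_pV2 ?posrE ?exprn_gt0 //.
by rewrite ler_eXn2l // ltr1n.
Qed.

Lemma pow_le1 (R : realType) n : (2 : R) ^- n <= 1.
Proof. by have := pow_anti R (leq0n n); rewrite expr0 invr1. Qed.

Lemma pow_S (R : realType) n : (2 : R) * (2 : R) ^- n.+1 = (2 : R) ^- n.
Proof.
by rewrite exprS invfM mulrA mulfV ?mul1r // pnatr_eq0.
Qed.

Lemma pow_lt2 (R : realType) n m : (2 : R) ^- n < 2 * (2 : R) ^- m -> (m <= n)%N.
Proof.
move=> H; rewrite leqNgt; apply/negP => Hnm.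
have H2 := pow_anti R Hnm.
have : (2 : R) * 2 ^- m <= 2 * 2 ^- n.+1 by rewrite ler_pM2l.
by rewrite pow_S => H3; move: (lt_le_trans H H3); rewrite ltxx.
Qed.

Definition rset (R : realType) t u : set R :=
  [set (2 : R) ^- n | n in
        [set n : nat | (1 <= n)%N /\ (n <= height t)%N /\ (n <= height u)%N
                       /\ nteq (trunc n t) (trunc n u)]] `|` [set 1].

Lemma rdistE (R : realType) t u : @rdist R t u = inf (@rset R t u).
Proof. by []. Qed.

Lemma rset_lb (R : realType) t u : has_lbound (@rset R t u).
Proof.
exists 0 => y [[n _ <-]|->]; [exact: ltW (pow_pos R n) | exact: ler01].
Qed.

Lemma rset_ne (R : realType) t u : @rset R t u !=set0.
Proof. by exists 1; right. Qed.

Lemma Ag_rset (R : realType) n t u : Ag n t u -> @rset R t u ((2 : R) ^- n).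
Proof.
case=> H1 H2 H3 H4; left; exists n => //; split => //; split => //; split => //.
by rewrite !truncE.
Qed.

Lemma rset_Ag (R : realType) y t u : @rset R t u y ->
  y = 1 \/ exists n, Ag n t u /\ y = (2 : R) ^- n.
Proof.
case=> [[n [H1 [H2 [H3 H4]]] <-]|->]; last by left.
by right; exists n; split => //; split => //; rewrite -!truncE.
Qed.

Lemma rdist_ge0 (R : realType) t u : 0 <= @rdist R t u.
Proof.
rewrite rdistE; apply: lb_le_inf (rset_ne R t u) _.
by move=> y [[n _ <-]|->]; [exact: ltW (pow_pos R n) | exact: ler01].
Qed.

Lemma rdist_Ag (R : realType) n t u : Ag n t u -> @rdist R t u <= (2 : R) ^- n.
Proof. by move=> H; rewrite rdistE; apply: ge_inf (rset_lb R t u) _ (Ag_rset R H). Qed.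

Lemma rdist_lt (R : realType) m t u : (1 <= m)%N ->
  @rdist R t u < 2 * (2 : R) ^- m -> exists n, (m <= n)%N /\ Ag n t u.
Proof.
move=> Hm; rewrite rdistE => /(inf_lt (rset_ne R t u)) [y Hy Hlt].
case: (rset_Ag Hy) => [Hy1|[n [HA Hyn]]].
- exfalso; move: Hlt; rewrite Hy1.
  case: m Hm => // m _; rewrite pow_S => H.
  by move: (lt_le_trans H (pow_le1 R m)); rewrite ltxx.
- by exists n; split => //; apply: (@pow_lt2 R); rewrite -Hyn.
Qed.

Lemma rdist_geh (R : realType) t u : (2 : R) ^- (height t) <= @rdist R t u.
Proof.
rewrite rdistE; apply: lb_le_inf (rset_ne R t u) _.
move=> y /rset_Ag [->|[n [[_ H _ _] ->]]]; first exact: pow_le1.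
exact: pow_anti.
Qed.

Lemma pm_leP (R : realType) t u : pm_le (@rdist R) t u <-> Ag (height t) t u.
Proof.
split.
- move=> H.
  have H1 : @rdist R t t <= (2 : R) ^- height t.
    by apply: rdist_Ag; apply: Ag_refl; rewrite height_pos leqnn.
  have H2 : (2 : R) ^- height t < 2 * (2 : R) ^- height t.
    by rewrite ltr_pMl ?pow_pos // ltr1n.
  have [n [Hn HA]] := rdist_lt (height_pos t) (le_lt_trans (le_trans H H1) H2).
  have Hn' : n = height t by case: HA => _ ? _ _; apply/eqP; rewrite eqn_leq Hn andbT.
  by rewrite -Hn'.
- move=> H; rewrite /pm_le; apply: le_trans (rdist_Ag R H) _; exact: rdist_geh.
Qed.

Lemma le_refl' (R : realType) t : pm_le (@rdist R) t t.
Proof. by apply/pm_leP; apply: Ag_refl; rewrite height_pos leqnn. Qed.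

Lemma le_height (R : realType) t u : pm_le (@rdist R) t u -> (height t <= height u)%N.
Proof. by move/pm_leP => []. Qed.

Lemma le_trans' (R : realType) t u v :
  pm_le (@rdist R) t u -> pm_le (@rdist R) u v -> pm_le (@rdist R) t v.
Proof.
move=> H1 H2; have Hh := le_height H1.
move/pm_leP: H1 => H1; move/pm_leP: H2 => H2; apply/pm_leP.
apply: Ag_trans H1 _; apply: Ag_down H2; by rewrite height_pos.
Qed.

Lemma le_tree (R : realType) u w z :
  pm_le (@rdist R) u z -> pm_le (@rdist R) w z -> height u = height w ->
  pm_le (@rdist R) u w.
Proof.
move=> /pm_leP H1 /pm_leP H2 Hh; apply/pm_leP.
by apply: Ag_trans H1 _; apply: Ag_sym; rewrite Hh.
Qed.

Lemma Ag_monol (R : realType) n a a' b :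
  Ag n a b -> pm_le (@rdist R) a a' -> Ag n a' b.
Proof.
move=> HA /pm_leP H.
have Hn : (1 <= n <= height a)%N by case: HA => ? ? _ _; lia.
apply: Ag_trans HA; apply: Ag_sym; exact: Ag_down H.
Qed.

Lemma Ag_trunc (R : realType) m b a : Ag m b a ->
  exists w, [/\ height w = m, pm_le (@rdist R) w b & pm_le (@rdist R) w a].
Proof.
move=> HA; case: (HA) => H1 H2 H3 H4.
have Hw : height (trunc_rec m b) = m by rewrite height_trunc_rec //; lia.
have Hc : trunc_rec m (trunc_rec m b) = trunc_rec m b by rewrite trunc_rec_comp // H1 leqnn.
exists (trunc_rec m b); split => //; apply/pm_leP; rewrite Hw; split => //; rewrite ?Hw //.
- by rewrite Hc; apply: nteq_refl.
- by rewrite Hc.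
Qed.

Lemma rdist_le1 (R : realType) t u : @rdist R t u <= 1.
Proof. by rewrite rdistE; apply: ge_inf (@rset_lb R t u) _ _; right. Qed.

Lemma rdist_monol (R : realType) a a' b : pm_le (@rdist R) a a' ->
  @rdist R a' b <= @rdist R a b.
Proof.
move=> H; rewrite [X in _ <= X]rdistE; apply: lb_le_inf (@rset_ne R a b) _.
move=> y /rset_Ag [->|[n [HA ->]]]; first exact: rdist_le1.
by apply: rdist_Ag; apply: Ag_monol H.
Qed.

Lemma rdist_monor (R : realType) a b b' : pm_le (@rdist R) b b' ->
  @rdist R a b' <= @rdist R a b.
Proof.
move=> H; rewrite [X in _ <= X]rdistE; apply: lb_le_inf (@rset_ne R a b) _.
move=> y /rset_Ag [->|[n [HA ->]]]; first exact: rdist_le1.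
by apply: rdist_Ag; apply: Ag_sym; apply: Ag_monol H; apply: Ag_sym.
Qed.

Lemma lb_img (R : realType) (P : set (nterm * nterm)) :
  has_lbound [set @rdist R q.1 q.2 | q in P].
Proof. by exists 0 => y [q _ <-]; apply: rdist_ge0. Qed.

Definition G (R : realType) (A B : set nterm) : R :=
  inf [set @rdist R q.1 q.2 | q in [set q | A q.1 /\ B q.2]].

Lemma idealP (R : realType) (A : Ide R) : is_ideal (pm_le (@rdist R)) (proj1_sig A).
Proof. exact: proj2_sig A. Qed.

Lemma G_le (R : realType) (A B : set nterm) a b : A a -> B b -> G R A B <= @rdist R a b.
Proof. by move=> Ha Hb; apply: ge_inf (lb_img _ _) _ _; exists (a, b). Qed.

Lemma G_lt (R : realType) (A B : set nterm) a0 b0 c : A a0 -> B b0 -> G R A B < c ->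
  exists a b, [/\ A a, B b & @rdist R a b < c].
Proof.
move=> Ha0 Hb0 H.
have Hne : [set @rdist R q.1 q.2 | q in [set q | A q.1 /\ B q.2]] !=set0.
  by exists (@rdist R a0 b0); exists (a0, b0).
have [y [q [Hq1 Hq2] <-] Hlt] := inf_lt Hne H.
by exists q.1, q.2.
Qed.

Lemma inner1 (R : realType) (A B : Ide R) a : proj1_sig A a ->
  inf [set @rdist R q.1 q.2 | q in [set q : nterm * nterm | proj1_sig A q.1 /\
     pm_le (@rdist R) a q.1 /\ proj1_sig B q.2]] = G R (proj1_sig A) (proj1_sig B).
Proof.
move=> Ha; have [[a0 Ha0] [HlA HdA]] := idealP A; have [[b0 Hb0] _] := idealP B.
apply/le_anti/andP; split.
- apply: lb_le_inf; first by exists (@rdist R a0 b0); exists (a0, b0).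
  move=> y [[a'' b] /= [Ha'' Hb] <-].
  have [z [Hz [Hz1 Hz2]]] := HdA a a'' Ha Ha''.
  apply: le_trans (rdist_monol b Hz2).
  by apply: ge_inf (lb_img _ _) _ _; exists (z, b).
- apply: lb_le_inf; first by exists (@rdist R a b0); exists (a, b0) => //=; split => //; split => //; apply: le_refl'.
  move=> y [[a' b] /= [Ha' [_ Hb]] <-]; exact: G_le.
Qed.

Lemma inner2 (R : realType) (A B : Ide R) b : proj1_sig B b ->
  inf [set @rdist R q.1 q.2 | q in [set q : nterm * nterm | proj1_sig B q.2 /\
     pm_le (@rdist R) b q.2 /\ proj1_sig A q.1]] = G R (proj1_sig A) (proj1_sig B).
Proof.
move=> Hb; have [[a0 Ha0] _] := idealP A; have [[b0 Hb0] [HlB HdB]] := idealP B.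
apply/le_anti/andP; split.
- apply: lb_le_inf; first by exists (@rdist R a0 b0); exists (a0, b0).
  move=> y [[a b''] /= [Ha Hb''] <-].
  have [z [Hz [Hz1 Hz2]]] := HdB b b'' Hb Hb''.
  apply: le_trans (rdist_monor a Hz2).
  by apply: ge_inf (lb_img _ _) _ _; exists (a, z).
- apply: lb_le_inf; first by exists (@rdist R a0 b); exists (a0, b) => //=; split => //; split => //; apply: le_refl'.
  move=> y [[a b'] /= [Hb' [_ Ha]] <-]; exact: G_le.
Qed.

Lemma Hstar_G (R : realType) (A B : Ide R) :
  @Hstar R A B = G R (proj1_sig A) (proj1_sig B).
Proof.
have [[a0 Ha0] _] := idealP A; have [[b0 Hb0] _] := idealP B.
rewrite /Hstar.
have -> : [set inf [set @rdist R q.1 q.2 | q in [set q : nterm * nterm | proj1_sig A q.1 /\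
     pm_le (@rdist R) a q.1 /\ proj1_sig B q.2]] | a in proj1_sig A] =
     [set G R (proj1_sig A) (proj1_sig B)].
  rewrite predeqE => y; split; first by move=> [a Ha <-]; rewrite inner1.
  by move=> ->; exists a0 => //; rewrite inner1.
have -> : [set inf [set @rdist R q.1 q.2 | q in [set q : nterm * nterm | proj1_sig B q.2 /\
     pm_le (@rdist R) b q.2 /\ proj1_sig A q.1]] | b in proj1_sig B] =
     [set G R (proj1_sig A) (proj1_sig B)].
  rewrite predeqE => y; split; first by move=> [b Hb <-]; rewrite inner2.
  by move=> ->; exists b0 => //; rewrite inner2.
by rewrite sup1 maxxx.
Qed.

Lemma pideal_proof (R : realType) u :
  is_ideal (pm_le (@rdist R)) [set t | pm_le (@rdist R) t u].
Proof.
split; first by exists u; apply: le_refl'.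
split; first by move=> x y /= Hy Hxy; apply: le_trans' Hxy Hy.
by move=> x y Hx Hy; exists u; split; [exact: le_refl' | split].
Qed.

Definition pideal (R : realType) u : Ide R := exist _ _ (pideal_proof R u).

Lemma union_proof (R : realType) (D : set (Ide R)) :
  directed (@ide_le R) D ->
  is_ideal (pm_le (@rdist R)) [set t | exists2 d, D d & proj1_sig d t].
Proof.
move=> [[d0 Hd0] HD]; split.
  by have [[x Hx] _] := idealP d0; exists x, d0.
split.
  move=> x y [d Hd Hy] Hxy; exists d => //.
  by have [_ [Hl _]] := idealP d; apply: Hl Hy Hxy.
move=> x y [d1 Hd1 Hx] [d2 Hd2 Hy].
have [d3 [Hd3 [H13 H23]]] := HD d1 d2 Hd1 Hd2.
have [_ [_ Hdir]] := idealP d3.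
have [z [Hz [Hxz Hyz]]] := Hdir x y (H13 _ Hx) (H23 _ Hy).
by exists z; split => //; exists d3.
Qed.

Theorem mainTheorem12 (R : realType) :
  [set U : set (Ide R) | scott_open (@ide_le R) U] =
  [set U : set (Ide R) | pm_open (@Hstar R) U].
Proof.
rewrite predeqE => U; split.
- move=> [Hup Hwb].
  pose F := [set p : Ide R * R | exists u, [/\ proj1_sig p.1 u, U (pideal R u) &
              p.2 = (2 : R) ^- height u]].
  exists F; split.
    by move=> [A e] [u [_ _ /= ->]]; apply: pow_pos.
  rewrite predeqE => A; split.
  + move=> HA; have [Y [HY HUY]] := Hwb A HA.
    pose D := [set P : Ide R | exists2 a, proj1_sig A a & P = pideal R a].
    have HD : directed (@ide_le R) D.
      have [[a0 Ha0] [_ HdA]] := idealP A.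
      split; first by exists (pideal R a0), a0.
      move=> P1 P2 [a1 Ha1 ->] [a2 Ha2 ->].
      have [z [Hz [H1 H2]]] := HdA a1 a2 Ha1 Ha2.
      exists (pideal R z); split; first by exists z.
      by split => t /= Ht; apply: le_trans' Ht _.
    have Hlub : is_lub (@ide_le R) D A.
      split.
        move=> P [a Ha ->] t /= Ht.
        by have [_ [Hl _]] := idealP A; apply: Hl Ha Ht.
      move=> V HV t Ht; apply: (HV (pideal R t)); first by exists t.
      exact: le_refl'.
    have [P [[a Ha ->] HYP]] := HY D A HD Hlub (fun t Ht => Ht).
    have HUa : U (pideal R a) by apply: Hup HYP.
    exists (A, (2 : R) ^- height a); first by exists a.
    by rewrite /pm_ball /= ltrDl pow_pos.
  + move: A => B [[A e] [u [Hu HUu /= ->]]]; rewrite /pm_ball /= => HB.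
    apply: (Hup _ _ HUu); rewrite /ide_le /= => t Ht.
    have [[a0 Ha0] [HlA HdA]] := idealP A.
    have [[b0 Hb0] [HlB _]] := idealP B.
    rewrite !Hstar_G in HB.
    have HAA : G R (sval A) (sval A) <= (2 : R) ^- height u.
      apply: le_trans (G_le R Hu Hu) _; apply: rdist_Ag; apply: Ag_refl.
      by rewrite height_pos leqnn.
    have HB2 : G R (sval B) (sval A) < 2 * (2 : R) ^- height u.
      by apply: lt_le_trans HB _; rewrite mulr_natl mulr2n lerD2r.
    have [b [a [Hb Ha Hba]]] := G_lt Hb0 Ha0 HB2.
    have [n [Hn HAg]] := rdist_lt (height_pos u) Hba.
    have HAg' : Ag (height u) b a by apply: Ag_down HAg; rewrite height_pos.
    have [w [Hw Hwb' Hwa]] := Ag_trunc R HAg'.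
    have [z [Hz [Huz Haz]]] := HdA u a Hu Ha.
    have Hwz := le_trans' Hwa Haz.
    have Huw : pm_le (@rdist R) u w by apply: le_tree Huz Hwz _.
    by apply: HlB Hb _; apply: le_trans' Ht (le_trans' Huw Hwb').
- move=> [F [HF ->]]; split.
  + move=> X Y [i Fi Hi] HXY; exists i => //.
    move: Hi; rewrite /pm_ball /= !Hstar_G => Hi; apply: le_lt_trans Hi.
    have [[x0 Hx0] _] := idealP X; have [[a0 Ha0] _] := idealP i.1.
    apply: lb_le_inf; first by exists (@rdist R x0 a0); exists (x0, a0).
    move=> y [[b a] /= [Hb Ha] <-]; apply: (G_le R) => //; exact: HXY.
  + move=> X [i Fi Hi].
    move: Hi; rewrite /pm_ball /= !Hstar_G => Hi.
    have [[x0 Hx0] _] := idealP X; have [[a0 Ha0] _] := idealP i.1.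
    have [b [a [Hb Ha Hlt]]] := G_lt Hx0 Ha0 Hi.
    exists (pideal R b); split.
      move=> D s HD Hlub Hs.
      pose Un : Ide R := exist _ _ (union_proof HD).
      have HsU : ide_le s Un by apply: Hlub.2 => d Hd t Ht; exists d.
      have [d Hd Hdb] := HsU b (Hs b Hb).
      exists d; split => // t /= Ht.
      by have [_ [Hl _]] := idealP d; apply: Hl Hdb Ht.
    exists i => //; rewrite /pm_ball /= !Hstar_G.
    apply: le_lt_trans Hlt; apply: (G_le R) => //=; exact: le_refl'.
Qed.
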